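(* Let $(a_k)_{k\ge1}$ be an unbounded, monotonically nondecreasing sequence of positive numbers, let $A=\{a_k:k\in\mathbb N\}\subset\mathbb{R}$, and let $\mathcal L'=(\mu_k)_{k\ge1}$ with $\mu_k=a_k^{-1}-a_{k+1}^{-1}$. Then $\mathcal L'$ is monotone (i.e. $\mu_{k+1}\le\mu_k$ for all $k\ge1$) if and only if for each $k\ge1$, $$\frac{a_{k+1}}{a_k}+\frac{a_{k+1}}{a_{k+2}}\ge2.$$ Furthermore, $\overline{\dim}_BA=\overline{\dim}_B\mathcal L'$.
   Context: For a nonempty bounded $B\subset\mathbb{R}^n$, with $B_\varepsilon$ its $\varepsilon$-neighbourhood and $|B_\varepsilon|$ its Lebesgue measure, $\overline{\dim}_BB=\inf\{s\ge0:\limsup_{\varepsilon\to0}|B_\varepsilon|/\varepsilon^{n-s}=0\}$. For a (possibly unbounded) set $A\subset\mathbb{R}^n$ with $0\notin\overline A$, $\overline{\dim}_BA:=\overline{\dim}_B\Phi(A)$ where $\Phi(x)=x/|x|^2$ (so here $\Phi(A)=\{a_k^{-1}:k\in\mathbb N\}$). For a sequence $\mathcal L'=(\mu_j)$ of positive numbers with $\sum_j\mu_j<\infty$, $\overline{\dim}_B\mathcal L':=\inf\{\gamma>0:\sum_{j=1}^\infty\mu_j^{\gamma}<\infty\}$. *)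

(* Defs.v *)
From HB Require Import structures.
From mathcomp Require Import all_boot all_order all_algebra.
From mathcomp Require Import all_classical all_reals all_analysis.
Set Implicit Arguments. Unset Strict Implicit. Unset Printing Implicit Defensive.
Import Order.TTheory GRing.Theory Num.Theory.
Import numFieldNormedType.Exports.
Local Open Scope classical_set_scope.
Local Open Scope ring_scope.

(* ambient dimension n = 1 (subsets of R) *)

Definition eps_nbhd {R : realType} (B : set R) (e : R) : set R :=
  [set x | exists2 b, B b & `|x - b| < e].

Definition limsup0 {R : realType} (f : R -> \bar R) : \bar R :=
  ereal_inf [set ereal_sup [set f e | e in [set e | 0 < e < d]] | d in [set d : R | 0 < d]].

Definition upper_box_dim {R : realType} (B : set R) : \bar R :=
  ereal_inf [set s%:E | s in [set s : R | 0 <= s /\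
     limsup0 (fun e => (lebesgue_measure (eps_nbhd B e) * ((e `^ (1 - s))^-1)%:E)%E) = 0%E]].

Definition Phi {R : realType} (x : R) : R := x / `|x| ^+ 2.

(* upper box dimension of a (possibly unbounded) A with 0 not in closure A *)
Definition upper_box_dim_inv {R : realType} (A : set R) : \bar R :=
  upper_box_dim (Phi @` A).

(* upper box dimension of a summable sequence of positive numbers (indexed from 0) *)
Definition seq_box_dim {R : realType} (mu : nat -> R) : \bar R :=
  ereal_inf [set g%:E | g in [set g : R | 0 < g /\
     (\sum_(0 <= j <oo) ((mu j) `^ g)%:E < +oo)%E]].

(* Main.v *)
Require Import Defs.
From HB Require Import structures.
From mathcomp Require Import all_boot all_order all_algebra.
From mathcomp Require Import all_classical all_reals all_analysis.
From mathcomp Require Import ring lra.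
Import Order.TTheory GRing.Theory Num.Theory.
Import numFieldNormedType.Exports.
Local Open Scope classical_set_scope.
Local Open Scope ring_scope.
Section Lim.
Variable R : realType.

Lemma minl (x y : R) : Num.min x y <= x. Proof. by rewrite ge_min lexx. Qed.
Lemma minr (x y : R) : Num.min x y <= y. Proof. by rewrite ge_min lexx orbT. Qed.
Lemma min_ge0 {x y : R} : 0 <= x -> 0 <= y -> 0 <= Num.min x y.
Proof. by move=> hx hy; rewrite le_min hx hy. Qed.


Lemma limsup0_small (f : R -> \bar R) : limsup0 f = 0%E ->
  exists2 d, 0 < d & forall e, 0 < e < d -> (f e < 1%:E)%E.
Proof.
rewrite /limsup0 => h.
have : (ereal_inf [set ereal_sup [set f e | e in [set e | (0 < e < d)%R]] | d in [set d : R | (0 < d)%R]] < 1%:E)%E.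
  by rewrite h lte_fin.
case/ereal_inf_lt => _ [d d0 <-] hs.
exists d => // e he; apply: le_lt_trans hs.
by apply: ereal_sup_ubound; exists e.
Qed.

Lemma limsup0_zero (f : R -> \bar R) : (forall e, 0 < e -> (0 <= f e)%E) ->
  (forall eps, 0 < eps -> exists2 d, 0 < d & forall e, 0 < e < d -> (f e <= eps%:E)%E) ->
  limsup0 f = 0%E.
Proof.
move=> f0 hf; apply/eqP; rewrite eq_le; apply/andP; split.
  apply/lee_addgt0Pr => eps eps0; rewrite add0e.
  have [d d0 hd] := hf eps eps0.
  apply: (@le_trans _ _ (ereal_sup [set f e | e in [set e | 0 < e < d]])).
    by apply: ereal_inf_lbound; exists d.
  by apply: ge_ereal_sup => _ [e he <-]; exact: hd.
apply: le_ereal_inf_tmp => _ [d d0 <-].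
apply: le_ereal_sup_tmp; exists (f (d / 2)); first exists (d / 2) => //.
  by move: d0; rewrite /=; move=> ?; apply/andP; split; lra.
by apply: f0; move: d0 => /= ?; lra.
Qed.


Lemma minpow (x y g : R) : 0 <= x -> 0 < y -> 0 < g <= 1 ->
  Num.min x y <= y `^ (1 - g) * x `^ g.
Proof.
move=> x0 y0 /andP[g0 g1].
have nx : x \in Num.nneg by rewrite nnegrE.
have ny : y \in Num.nneg by rewrite nnegrE ltW.
have pd z : 0 <= z -> z `^ (1 - g) * z `^ g = z.
  move=> z0; rewrite -powRD; last by rewrite subrK oner_eq0.
  by rewrite subrK powRr1.
have [xy|yx] := leP x y.
  rewrite -[leLHS](pd x x0).
  have hr : 0 <= 1 - g by lra.
  by apply: ler_wpM2r; [exact: powR_ge0|exact: (ge0_ler_powR hr nx ny xy)].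
rewrite -[leLHS](pd y (ltW y0)).
have hr : 0 <= g by lra.
by apply: ler_wpM2l; [exact: powR_ge0|exact: (ge0_ler_powR hr ny nx (ltW yx))].
Qed.

Lemma limsup_from_bound (m : R -> \bar R) s K tau :
  (forall e, (0 <= m e)%E) -> 0 <= K -> 0 < tau ->
  (forall e, 0 < e <= 1 -> (m e <= (K * e `^ (1 - s + tau))%:E)%E) ->
  limsup0 (fun e => (m e * ((e `^ (1 - s))^-1)%:E)%E) = 0%E.
Proof.
move=> m0 K0 t0 hm; apply: limsup0_zero.
  by move=> e e0; apply: mule_ge0 => //; rewrite lee_fin invr_ge0 powR_ge0.
move=> eps eps0.
pose q := (eps / (K + 1)) `^ (tau^-1).
have q0 : 0 < q by apply: powR_gt0; apply: divr_gt0 => //; lra.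
exists (Num.min 1 q); first by rewrite lt_min ltr01 q0.
move=> e /andP[e0 ed].
have e1 : e <= 1 by apply: ltW; apply: lt_le_trans ed _; exact: minl.
have eq : e < q by apply: lt_le_trans ed _; exact: minr.
apply: (le_trans (lee_wpmul2r _ (hm e _))); first by rewrite lee_fin invr_ge0 powR_ge0.
  by rewrite e0 e1.
rewrite -EFinM lee_fin.
have pe : 0 < e `^ (1 - s) by exact: powR_gt0.
rewrite powRD; last by rewrite implybE (gt_eqF e0) orbT.
have -> : K * (e `^ (1 - s) * e `^ tau) * (e `^ (1 - s))^-1 = K * e `^ tau.
  by field; rewrite gt_eqF.
have : e `^ tau <= eps / (K + 1).
  have -> : eps / (K + 1) = q `^ tau.
    rewrite /q -powRrM mulVf ?gt_eqF // powRr1 //.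
    by apply: divr_ge0; lra.
  have hr : 0 <= tau by lra.
  by apply: (ge0_ler_powR hr); rewrite ?nnegrE; lra.
move=> h; apply: (le_trans (ler_wpM2l K0 h)).
rewrite mulrA ler_pdivrMr; last lra.
nra.
Qed.


Lemma sum_ind (c : R) : 0 <= c ->
  (\sum_(k <oo) ((k == 0)%N%:R * c)%:E)%E = c%:E.
Proof.
move=> c0; rewrite (nneseries_split 0 1); last first.
  by move=> k _; rewrite lee_fin mulr_ge0.
rewrite add0n big_nat1 /= mul1r eseries0 ?adde0 //.
by move=> [|i] // _ _; rewrite mul0r.
Qed.

Lemma geom_fin (C r : R) : 0 <= r < 1 ->
  (\sum_(k <oo) (C * r ^+ k)%:E < +oo)%E.
Proof.
move=> /andP[r0 r1].
have hc : cvgn (series (geometric C r)).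
  by apply: is_cvg_geometric_series; rewrite ger0_norm.
have -> : (\sum_(k <oo) (C * r ^+ k)%:E)%E = (limn (series (geometric C r)))%:E.
  rewrite -(EFin_lim hc); congr (limn _); apply/funext => n /=.
  by rewrite sumEFin /series /=.
exact: ltry.
Qed.

Lemma powRX (a r : R) m : 0 <= a -> (a ^+ m) `^ r = (a `^ r) ^+ m.
Proof.
move=> a0; rewrite -!powR_mulrn // ?powR_ge0 // -!powRrM mulrC //.
Qed.

Lemma exists_scale (c x : R) : 0 < c -> 0 < x <= c ->
  exists m, c * (2 `^ (-1)) ^+ m <= x < 2 * (c * (2 `^ (-1)) ^+ m).
Proof.
move=> c0 /andP[x0 xc].
have t2 : (2 : R) `^ (-1) = 2^-1 by rewrite powR_inv1.
rewrite t2.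
have ex : exists m, c * 2^-1 ^+ m <= x.
  have hb : 0 <= c / x by apply: divr_ge0; lra.
  have := archi_boundP hb; set m := Num.bound _ => hm.
  have h2 : c / x <= 2 ^+ m.
    by rewrite (le_trans (ltW hm)) // -natrX ler_nat ltnW // ltn_expl.
  exists m; rewrite exprVn ler_pdivrMr ?exprn_gt0 //.
  by rewrite mulrC -ler_pdivrMr.
case: (ex_minnP ex) => m hm hmin.
exists m; rewrite hm /=.
case: m hm hmin => [|m] hm hmin.
  by rewrite expr0 mulr1; lra.
have : ~~ (c * 2^-1 ^+ m <= x) by apply/negP => /hmin; rewrite ltnn.
rewrite -ltNge exprS => h.
have -> : 2 * (c * (2^-1 * 2^-1 ^+ m)) = c * 2^-1 ^+ m by field.
exact: h.
Qed.


Lemma two_ne0 : (2 : R) != 0. Proof. by rewrite pnatr_eq0. Qed.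

Lemma t_pow (r : R) : (2 `^ (-1)) `^ r = 2 `^ (- r).
Proof. by rewrite -powRrM mulN1r. Qed.

Lemma pt_bound (c g x : R) m : 0 < c -> 0 < g -> 0 < x ->
  c * (2 `^ (-1)) ^+ m <= x < 2 * (c * (2 `^ (-1)) ^+ m) ->
  x `^ g <= 2 `^ g * c `^ (g - 1) * (2 `^ (1 - g)) ^+ m * (c * (2 `^ (-1)) ^+ m).
Proof.
set t := 2 `^ (-1).
have t0 : 0 < t by apply: powR_gt0.
move=> c0 g0 x0 /andP[_ hx].
have h1 : c `^ (g - 1) * c = c `^ g.
  rewrite -{2}(powRr1 (ltW c0)) -powRD; last by rewrite implybE (gt_eqF c0) orbT.
  by rewrite subrK.
have h2 : 2 `^ (1 - g) * t = t `^ g.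
  rewrite /t t_pow -powRD; last by rewrite implybE two_ne0 orbT.
  by congr (2 `^ _); ring.
have tm : 0 <= t ^+ m by apply: exprn_ge0; exact: ltW.
apply: (@le_trans _ _ ((2 * (c * t ^+ m)) `^ g)).
  have hr : 0 <= g by lra.
  by apply: (ge0_ler_powR hr); rewrite ?nnegrE ?(ltW hx) //; try lra; apply: mulr_ge0; try lra; apply: mulr_ge0; lra.
rewrite !powRM //; try lra; try (apply: mulr_ge0; lra).
rewrite powRX; last exact: ltW.
rewrite -h2 exprMn -h1.
rewrite le_eqVlt; apply/orP; left; apply/eqP; ring.
Qed.

Lemma dyadic (u : nat -> R) c g sg K : 0 < c -> (forall k, 0 <= u k <= c) ->
  0 < g -> sg < g -> 0 <= K ->
  (forall e, 0 < e <= c ->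
     (\sum_(k <oo) (Num.min (u k) e)%:E <= (K * e `^ (1 - sg))%:E)%E) ->
  (\sum_(k <oo) ((u k) `^ g)%:E < +oo)%E.
Proof.
move=> c0 uc g0 sgg K0 hX.
set t := 2 `^ (-1) : R.
have t0 : 0 < t by apply: powR_gt0.
have t1 : t <= 1 by rewrite /t powR_inv1 // invf_le1 //; lra.
pose e m := c * t ^+ m.
pose w m := (2 `^ (1 - g)) ^+ m.
pose L := 2 `^ g * c `^ (g - 1).
have e0 m : 0 < e m by rewrite /e mulr_gt0 // exprn_gt0.
have ec m : e m <= c by rewrite /e -[leRHS]mulr1 ler_wpM2l ?(ltW c0) // exprn_ile1 // ltW.
have w0 m : 0 <= w m by rewrite /w exprn_ge0 // powR_ge0.
have L0 : 0 <= L by rewrite /L mulr_ge0 // powR_ge0.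
have tm m : 0 <= t ^+ m by rewrite exprn_ge0 // ltW.
have trm0 m k : (0 <= ((L * w m) * Num.min (u k) (e m))%:E)%E.
  rewrite lee_fin; apply: mulr_ge0; first exact: mulr_ge0.
  by apply: min_ge0; [case/andP: (uc k)|exact: ltW].
have pt k : (((u k) `^ g)%:E <= \sum_(m <oo) ((L * w m) * Num.min (u k) (e m))%:E)%E.
  case/andP: (uc k) => uk0 ukc.
  have [uz|upos] := eqVneq (u k) 0.
    rewrite uz powR0 ?gt_eqF //; apply: nneseries_ge0 => n _ _; by have := trm0 n k; rewrite uz.
  have up : 0 < u k by rewrite lt_def upos uk0.
  have [m hm] := @exists_scale c (u k) c0 (ltac:(rewrite up ukc //) : 0 < u k <= c).
  rewrite (@nneseriesD1 _ _ m xpredT) //.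
  apply: (le_trans _ (leeDl _ _)); last first.
    by apply: nneseries_ge0 => n _ _; exact: trm0.
  rewrite lee_fin min_r; last by case/andP: hm.
  by rewrite /L /w /e; apply: pt_bound.
apply: (le_lt_trans (lee_nneseries _ _)); first by move=> k _ _; rewrite lee_fin powR_ge0.
  by move=> k _; exact: (pt k).
rewrite nneseries_interchange; last by move=> k m; exact: trm0.
pose rho := 2 `^ (1 - g) * t `^ (1 - sg).
have rho0 : 0 <= rho by rewrite /rho mulr_ge0 // powR_ge0.
have rho1 : rho < 1.
  rewrite /rho /t t_pow -powRD; last by rewrite implybE two_ne0 orbT.
  rewrite /powR (negbTE two_ne0) expR_lt1.
  have l2 : 0 < ln (2 : R) by apply: ln_gt0; lra.
  nra.
have hr : 0 <= rho < 1 by rewrite rho0 rho1.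
apply: le_lt_trans (geom_fin (L * K * c `^ (1 - sg)) rho hr).
apply: lee_nneseries; first by move=> m _ _; apply: nneseries_ge0 => k _ _; exact: trm0.
move=> m _.
rewrite (eq_eseriesr (fun k _ => EFinM _ _)) nneseriesZl; last first.
  by move=> k _; rewrite lee_fin min_ge0 // ?(ltW (e0 m)) //; case/andP: (uc k).
apply: (le_trans (lee_wpmul2l _ (hX (e m) _))).
- by rewrite lee_fin mulr_ge0.
- by rewrite e0 ec.
rewrite -EFinM lee_fin le_eqVlt; apply/orP; left; apply/eqP.
rewrite /e powRM; [|exact: ltW|exact: tm].
rewrite powRX; last exact: ltW.
rewrite /rho exprMn /w.
ring.
Qed.

End Lim.
Arguments minl {R}. Arguments minr {R}. Arguments min_ge0 {R x y}.

Section S.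
Variable R : realType.
Variable b : nat -> R.
Hypothesis b_gt0 : forall k, 0 < b k.
Hypothesis b_le : forall k, b k.+1 <= b k.
Hypothesis b_small : forall x, 0 < x -> exists n, b n < x.

Definition l k := b k - b k.+1.

Lemma l_ge0 k : 0 <= l k.
Proof. by rewrite /l subr_ge0. Qed.

Lemma b_anti {i j} : (i <= j)%N -> b j <= b i.
Proof.
move/subnK <-; elim: (j - i)%N => [|n IH]; first by rewrite add0n.
by rewrite addSn (le_trans (b_le _)).
Qed.

Lemma l_le_b0 k : l k <= b 0.
Proof. rewrite /l; have := b_anti (leq0n k); have := b_gt0 k.+1; lra. Qed.

Definition E (e : R) : set R := \bigcup_k `](b k - e), (b k + e)[%classic.

Lemma nbhdE e : eps_nbhd (range b) e = E e.
Proof.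
apply/seteqP; split => x.
  move=> [_ [k _ <-] h]; exists k => //=; rewrite in_itv /=.
  move: h; rewrite ltr_norml; lra.
move=> [k _]; rewrite /= in_itv /= => h; exists (b k); first by exists k.
rewrite ltr_norml; lra.
Qed.

Lemma E_meas e : measurable (E e : set (measurableTypeR R)).
Proof. by apply: bigcup_measurable => k _; exact: measurable_itv. Qed.

Lemma E_ub e : 0 < e -> (lebesgue_measure (E e : set (measurableTypeR R)) <= (b 0 + 2 * e)%:E)%E.
Proof.
move=> e0.
apply: (@le_trans _ _ (lebesgue_measure (`](- e), (b 0 + e)[%classic : set (measurableTypeR R)))).
  apply: le_measure; rewrite ?inE; [exact: E_meas|exact: measurable_itv|].
  move=> x [k _]; rewrite /= !in_itv /= => h.
  have := b_anti (leq0n k); have := b_gt0 k; lra.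
rewrite lebesgue_measure_itv /= lte_fin.
case: ifP => _; last by rewrite lee_fin; have := b_gt0 0; lra.
by rewrite -EFinB lee_fin; lra.
Qed.


Local Notation mu := (@lebesgue_measure R).

Lemma E_lb e : 0 < e ->
  (\sum_(k <oo) (Num.min (l k) e)%:E <= mu (E e : set (measurableTypeR R)))%E.
Proof.
move=> e0.
pose D k : set (measurableTypeR R) := `[b k.+1, (b k.+1 + Num.min (l k) e)[%classic.
have Dm k : measurable (D k) by exact: measurable_itv.
have UDm : measurable (\bigcup_k D k) by exact: bigcup_measurable.
have tD : trivIset setT D.
  have H i j : (i < j)%N -> forall x, D i x -> D j x -> False.
    move=> ij x; rewrite /D /= !in_itv /= => /andP[h1 h2] /andP[h3 h4].
    have := b_anti ij; have := minl (l j) e; rewrite /l => hm.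
    lra.
  move=> i j _ _ [x [hi hj]]; case: (ltngtP i j) => // ij.
    by case: (H _ _ ij x).
  by case: (H _ _ ij x).
apply: (@le_trans _ _ (mu (\bigcup_k D k))); last first.
  apply: le_measure; rewrite ?inE //; first exact: E_meas.
  move=> x [k _]; rewrite /D /= in_itv /= => /andP[h1 h2].
  exists k.+1 => //; rewrite /= in_itv /=; have := minr (l k) e; lra.
rewrite measure_semi_bigcup //.
apply: lee_nneseries => [k _ _|k _]; first by rewrite lee_fin min_ge0 // ?l_ge0 ?ltW.
rewrite /D /= (lebesgue_measure_itv (R:=R)) /= lte_fin.
have hm := min_ge0 (l_ge0 k) (ltW e0).
case: ifP => h; first by rewrite -EFinB lee_fin; lra.
rewrite lee_fin; move/negbT: h; rewrite -leNgt; lra.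
Qed.


Lemma find_k {x} : 0 < x -> x < b 0 -> exists k, b k.+1 < x <= b k.
Proof.
move=> x0 xb.
have ex : exists n, b n < x by exact: b_small.
case: (ex_minnP ex) => n hn hmin.
case: n hn hmin => [|k] hn hmin; first by move: hn; rewrite ltNge (ltW xb).
exists k; rewrite hn /=; rewrite leNgt; apply/negP => /hmin.
by rewrite ltnn.
Qed.

Lemma itv_meas_le (b1 b2 : bool) (x y : R) : x <= y ->
  (mu ([set` Interval (BSide b1 x) (BSide b2 y)] : set (measurableTypeR R)) <= (y - x)%:E)%E.
Proof.
move=> xy; rewrite (lebesgue_measure_itv (R:=R)).
by case: ifP => _ //=; rewrite lee_fin subr_ge0.
Qed.

Definition hh e k := Num.min e (l k / 2).

Lemma E_ub2 e : 0 < e ->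
  (mu (E e : set (measurableTypeR R)) <=
   \sum_(k <oo) (Num.min (l k) (2 * e) + (k == 0)%:R * (2 * e))%:E)%E.
Proof.
move=> e0.
pose G k : set (measurableTypeR R) :=
  `[b k.+1, (b k.+1 + hh e k)]%classic `|` `[(b k - hh e k), b k]%classic.
pose Z k : set (measurableTypeR R) :=
  if (k == 0)%N then `](- e), 0]%classic `|` `[b 0, (b 0 + e)[%classic else set0.
pose F k := G k `|` Z k.
have Gm k : measurable (G k) by apply: measurableU; exact: measurable_itv.
have Zm k : measurable (Z k).
  by rewrite /Z; case: ifP => _ //; apply: measurableU; exact: measurable_itv.
have Fm k : measurable (F k) by exact: measurableU.
have hh0 k : 0 <= hh e k by apply: min_ge0; [exact: ltW|have := l_ge0 k; lra].
have hh1 k : hh e k <= e by exact: minl.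
have hh2 k : hh e k <= l k / 2 by exact: minr.
apply: (@le_trans _ _ (\sum_(k <oo) mu (F k))%E).
  apply: measure_sigma_subadditive => //; first exact: E_meas.
  move=> x [j _]; rewrite /= in_itv /= => /andP[hj1 hj2].
  have bj0 := b_anti (leq0n j); have bj := b_gt0 j.
  have [x0|x0] := leP x 0.
    exists 0%N => //; right; left; rewrite /= in_itv /=; apply/andP; split; lra.
  have [xb|xb] := leP (b 0) x.
    exists 0%N => //; right; right; rewrite /= in_itv /=; apply/andP; split; lra.
  have [k /andP[hk1 hk2]] := find_k x0 xb.
  have hor : x - b k.+1 < e \/ b k - x < e.
    case: (leqP j k) => jk.
      by right; have := b_anti jk; lra.
    by left; have := b_anti jk; lra.
  exists k => //; left.
  have := hh1 k; have := hh2 k; rewrite /l => h2 h1.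
  have [xl|xl] := leP x (b k.+1 + l k / 2).
    left; rewrite /= in_itv /=; apply/andP; split; first lra.
    have : x - b k.+1 <= hh e k.
      rewrite /hh le_min; apply/andP; split; last by lra.
      by case: hor; rewrite /l in xl *; lra.
    lra.
  right; rewrite /= in_itv /=; apply/andP; split; last lra.
  have : b k - x <= hh e k.
    rewrite /hh le_min; apply/andP; split; last by rewrite /l in xl *; lra.
    by case: hor; rewrite /l in xl *; lra.
  lra.
apply: lee_nneseries => [k _ _|k _]; first exact: measure_ge0.
have itv_le (x y : R) (b1 b2 : bool) : x <= y ->
    (mu (`[x, y]%classic : set (measurableTypeR R)) <= (y - x)%:E)%E.
  move=> xy; rewrite (lebesgue_measure_itv (R:=R)) /= lte_fin.
  by case: ifP => _; rewrite -?EFinB lee_fin // subr_ge0.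
apply: (le_trans (measureU2 _ (Gm k) (Zm k))).
rewrite EFinD; apply: leeD.
  apply: (le_trans (measureU2 _ _ _)); try exact: measurable_itv.
  rewrite (@le_trans _ _ ((hh e k)%:E + (hh e k)%:E)%E) //.
    apply: leeD.
      by have := hh0 k; have := hh1 k; move=> ? ?; apply: le_trans (itv_le _ _ true true _) _; [lra|rewrite lee_fin; lra].
    by have := hh0 k; have := hh1 k; move=> ? ?; apply: le_trans (itv_le _ _ true true _) _; [lra|rewrite lee_fin; lra].
  rewrite -EFinD lee_fin le_min; apply/andP; split.
    by have := hh2 k; lra.
  by have := hh1 k; lra.
rewrite /Z; case: ifP => _; last by rewrite measure0 mul0r.
rewrite mul1r; apply: (le_trans (measureU2 _ _ _)); try exact: measurable_itv.
have -> : (2 * e)%:E = (e%:E + e%:E)%E by rewrite -EFinD; congr EFin; lra.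
have := b_gt0 0 => hb.
apply: leeD.
  by apply: le_trans (itv_meas_le false false _ _ _) _; [lra|rewrite lee_fin; lra].
by apply: le_trans (itv_meas_le true true _ _ _) _; [lra|rewrite lee_fin; lra].
Qed.


Lemma dir1 g s : 0 < g -> (\sum_(k <oo) ((l k) `^ g)%:E < +oo)%E -> g < s ->
  limsup0 (fun e => (mu (E e : set (measurableTypeR R)) * ((e `^ (1 - s))^-1)%:E)%E) = 0%E.
Proof.
move=> g0 Cfin gs.
have [g1|g1] := leP g 1.
  set C := (\sum_(k <oo) ((l k) `^ g)%:E)%E in Cfin.
  have C0 : (0 <= C)%E by apply: nneseries_ge0 => k _ _; rewrite lee_fin powR_ge0.
  have Cf : C \is a fin_num by rewrite ge0_fin_numE.
  have Cr0 : 0 <= fine C by rewrite fine_ge0.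
  have p0 : 0 <= 2 `^ (1 - g) by exact: powR_ge0.
  apply: (@limsup_from_bound _ _ _ (2 `^ (1 - g) * fine C + 2) (s - g)).
  - by move=> e; exact: measure_ge0.
  - by apply: addr_ge0 => //; apply: mulr_ge0.
  - by lra.
  move=> e /andP[e0 e1].
  have -> : 1 - s + (s - g) = 1 - g by ring.
  apply: (le_trans (E_ub2 _ e0)).
  rewrite (eq_eseriesr (fun k _ => EFinD _ _)) nneseriesD; first last.
  - by move=> k _ _; rewrite lee_fin mulr_ge0 // mulr_ge0 //; lra.
  - by move=> k _ _; rewrite lee_fin min_ge0 // ?l_ge0 //; lra.
  rewrite sum_ind; last lra.
  have e2 : 0 < 2 * e by lra.
  apply: (@le_trans _ _ (\sum_(k <oo) (((2 * e) `^ (1 - g))%:E * ((l k) `^ g)%:E) + (2 * e)%:E)%E).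
    apply: leeD => //; apply: lee_nneseries => [k _ _|k _].
      by rewrite lee_fin min_ge0 // ?l_ge0 //; lra.
    rewrite -EFinM lee_fin; apply: minpow => //; first exact: l_ge0.
    by rewrite g0 g1.
  rewrite nneseriesZl; last by move=> k _; rewrite lee_fin powR_ge0.
  rewrite -/C -(fineK Cf) -EFinM -EFinD lee_fin.
  rewrite powRM; [|lra|lra].
  have ee : e <= e `^ (1 - g) by apply: ger1_powR; [rewrite e0 e1|lra].
  have pe : 0 <= e `^ (1 - g) by exact: powR_ge0.
  nra.
apply: (@limsup_from_bound _ _ _ (b 0 + 2) (s - 1)).
- by move=> e; exact: measure_ge0.
- by have := b_gt0 0; lra.
- by lra.
move=> e /andP[e0 e1].
have -> : 1 - s + (s - 1) = 0 by ring.
rewrite powRr0 mulr1; apply: (le_trans (E_ub _ e0)).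
by rewrite lee_fin; lra.
Qed.



Lemma dir2 s g : 0 <= s ->
  limsup0 (fun e => (mu (E e : set (measurableTypeR R)) * ((e `^ (1 - s))^-1)%:E)%E) = 0%E ->
  s < g -> (\sum_(k <oo) ((l k) `^ g)%:E < +oo)%E.
Proof.
move=> s0 hls sg.
have [d d0 hd] := @limsup0_small R _ hls.
have hmu e : 0 < e < d -> (mu (E e : set (measurableTypeR R)) <= (e `^ (1 - s))%:E)%E.
  move=> /andP[e0 ed].
  have := hd e; rewrite e0 ed => /(_ isT) /ltW.
  have p0 : 0 < e `^ (1 - s) by exact: powR_gt0.
  by rewrite lee_pdivrMr // mul1e.
have b00 := b_gt0 0.
have uc k : 0 <= l k <= b 0 by rewrite l_ge0 l_le_b0.
have g0 : 0 < g by lra.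
pose M := b 0 + 2 * b 0.
have EM e : 0 < e <= b 0 -> (mu (E e : set (measurableTypeR R)) <= M%:E)%E.
  move=> /andP[e0 ec]; apply: (le_trans (E_ub _ e0)).
  by rewrite lee_fin /M; lra.
have [s1|s1] := ltP s 1.
  have pd : 0 < d `^ (1 - s) by exact: powR_gt0.
  apply: (@dyadic R l (b 0) g s (1 + M / d `^ (1 - s))) => //.
    by apply: addr_ge0 => //; apply: divr_ge0 => //; [rewrite /M; lra|exact: ltW].
  move=> e /andP[e0 ec]; apply: (le_trans (E_lb _ e0)).
  have pe : 0 < e `^ (1 - s) by exact: powR_gt0.
  have [ed|de] := ltP e d.
    apply: (le_trans (hmu e _)); first by rewrite e0 ed.
    rewrite lee_fin ler_pMl //.
    have : 0 <= M / d `^ (1 - s) by apply: divr_ge0 => //; [rewrite /M; lra|exact: ltW].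
    lra.
  apply: (le_trans (EM e _)); first by rewrite e0 ec.
  have hde : d `^ (1 - s) <= e `^ (1 - s).
    have hr : 0 <= 1 - s by lra.
    by apply: (ge0_ler_powR hr); rewrite ?nnegrE; lra.
  rewrite lee_fin mulrDl mul1r.
  have : M <= M / d `^ (1 - s) * e `^ (1 - s).
    rewrite mulrAC ler_pdivlMr // ler_wpM2l //; rewrite /M; lra.
  lra.
apply: (@dyadic R l (b 0) g 1 M) => //; first by lra.
  by rewrite /M; lra.
move=> e /andP[e0 ec]; apply: (le_trans (E_lb _ e0)).
by rewrite subrr powRr0 mulr1; apply: EM; rewrite e0 ec.
Qed.

End S.

Section Final.
Variable R : realType.

Lemma inf_le (S G : set R) : (forall g, G g -> forall s, g < s -> S s) ->
  (ereal_inf [set x%:E | x in S] <= ereal_inf [set x%:E | x in G])%E.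
Proof.
move=> h; apply: le_ereal_inf_tmp => _ [g Gg <-].
apply/lee_addgt0Pr => eps eps0; apply: ereal_inf_lbound.
exists (g + eps); last by rewrite EFinD.
by apply: (h g Gg); lra.
Qed.

Lemma inf_eq (S G : set R) : (forall g, G g -> forall s, g < s -> S s) ->
  (forall s, S s -> forall g, s < g -> G g) ->
  ereal_inf [set x%:E | x in S] = ereal_inf [set x%:E | x in G].
Proof.
by move=> h1 h2; apply/eqP; rewrite eq_le !inf_le.
Qed.

Lemma part1 (x y z : R) : 0 < x -> 0 < y -> 0 < z ->
  (y^-1 - z^-1 <= x^-1 - y^-1) <-> (2 <= y / x + y / z).
Proof.
move=> x0 y0 z0.
have Y0 : 0 < y^-1 by rewrite invr_gt0.
have e : (y / x + y / z) * y^-1 = x^-1 + z^-1.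
  by field; rewrite !gt_eqF.
rewrite -[2 <= _](ler_pM2r Y0) e.
by split => h; lra.
Qed.

End Final.

Theorem lemma2p12 (R : realType) (a : nat -> R) :
  (forall k, 0 < a k) ->
  (forall k, a k <= a k.+1) ->
  (forall M : R, exists k, M < a k) ->
  let mu := fun k => (a k)^-1 - (a k.+1)^-1 in
  ((forall k, mu k.+1 <= mu k) <->
   (forall k, 2 <= a k.+1 / a k + a k.+1 / a k.+2)) /\
  upper_box_dim_inv (range a) = seq_box_dim mu.
Proof.
move=> a0 amono aunb mu; split.
  split => h k.
    exact: (@part1 R _ _ _ (a0 k) (a0 k.+1) (a0 k.+2)).1 (h k).
  exact: (@part1 R _ _ _ (a0 k) (a0 k.+1) (a0 k.+2)).2 (h k).
pose b k := (a k)^-1.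
have b_gt0 k : 0 < b k by rewrite /b invr_gt0.
have b_le k : b k.+1 <= b k by rewrite /b lef_pV2 ?posrE.
have b_small x : 0 < x -> exists n, b n < x.
  move=> x0; have [k hk] := aunb x^-1; exists k.
  by rewrite /b -[X in _ < X](invrK x) ltf_pV2 ?posrE ?invr_gt0.
have hPhi : Phi @` range a = range b.
  apply/seteqP; split => x.
    by move=> [y [k _ <-] <-]; exists k => //; rewrite /Phi /b ger0_norm ?(ltW (a0 k)) // expr2 invfM mulrA divff ?gt_eqF // mul1r.
  move=> [k _ <-]; exists (a k); first by exists k.
  by rewrite /Phi /b ger0_norm ?(ltW (a0 k)) // expr2 invfM mulrA divff ?gt_eqF // mul1r.
rewrite /upper_box_dim_inv hPhi /upper_box_dim /seq_box_dim.
have hf s : (fun e => (lebesgue_measure (eps_nbhd (range b) e) * ((e `^ (1 - s))^-1)%:E)%E) =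
            (fun e => (lebesgue_measure (@E R b e : set (measurableTypeR R)) * ((e `^ (1 - s))^-1)%:E)%E).
  by apply/funext => e; rewrite nbhdE.
apply: inf_eq.
  move=> g [g0 hg] s gs; split; first lra.
  rewrite hf; exact: (@dir1 R b b_gt0 b_le b_small g s g0 hg gs).
move=> s [s0 hs] g sg; split; first lra.
rewrite hf in hs; exact: (@dir2 R b b_gt0 b_le s g s0 hs sg).
Qed.
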